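(* Let $\Gamma\subset\mathbb{F}_q[x]^n$ be an $\mathbb{F}_q[x]$-lattice of rank $n$ with $\mathrm{vol}(\Gamma)=q^m$, and let $\mu=\min_{0\ne v\in\Gamma}\deg v$. Then for every real $s\ge0$, $$\#\{v\in\Gamma:\deg v\le s\}\le q^{\max\left(0,\ n(s+1)-m,\ (n-1)(s+1-\mu)\right)}.$$
   Context: An $\mathbb{F}_q[x]$-lattice of rank $n$ is an $\mathbb{F}_q[x]$-submodule $\Gamma\subset\mathbb{F}_q[x]^n$ of finite index; $\mathrm{vol}(\Gamma)=[\mathbb{F}_q[x]^n:\Gamma]$. For $v=(v_1,\dots,v_n)$, $\deg v=\max_i\deg v_i$, with $\deg 0=-\infty$. *)

(* Defs.v *)
From HB Require Import structures.
From mathcomp Require Import all_boot all_order all_algebra.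
From mathcomp Require Import all_classical all_reals all_analysis.
Set Implicit Arguments. Unset Strict Implicit. Unset Printing Implicit Defensive.
Import Order.TTheory GRing.Theory Num.Theory.
Local Open Scope ring_scope.

Notation polyvec F n := ('rV[{poly F}]_n).

(* For v <> 0 this is the usual degree (a nat);
   for v = 0 we get 0 instead of -oo, which is harmless for the statement
   below since it is only compared with s >= 0 (0 satisfies deg 0 <= s
   either way) and mu is a minimum over nonzero vectors. *)
Definition vdeg (F : finFieldType) (n : nat) (v : polyvec F n) : nat :=
  \max_(i < n) (size (v ord0 i)).-1.

Definition is_submodule (F : finFieldType) (n : nat) (G : polyvec F n -> Prop) : Prop :=
  [/\ G 0,
      (forall u v, G u -> G v -> G (u + v)) &
      (forall (p : {poly F}) v, G v -> G (p *: v))].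

Definition has_index (F : finFieldType) (n : nat) (G : polyvec F n -> Prop) (N : nat) : Prop :=
  exists reps : seq (polyvec F n),
    [/\ size reps = N,
        (forall i j, (i < N)%N -> (j < N)%N -> i <> j -> ~ G (reps`_i - reps`_j)) &
        (forall v, exists2 r, r \in reps & G (v - r))].

Definition lattice_vol (F : finFieldType) (n : nat) (G : polyvec F n -> Prop) (N : nat) : Prop :=
  is_submodule G /\ has_index G N.

(* Main.v *)
Require Import Defs.
From HB Require Import structures.
From mathcomp Require Import all_boot all_order all_algebra.
From mathcomp Require Import all_classical all_reals all_analysis.
From mathcomp Require Import zify.
Import Order.TTheory GRing.Theory Num.Theory.
Local Open Scope ring_scope.
Set Implicit Arguments. Unset Strict Implicit. Unset Printing Implicit Defensive.


Definition bnd (F : finFieldType) n (k : nat) (v : 'rV[{poly F}]_n) : bool :=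
  [forall i, (size (v ord0 i) <= k)%N].
Definition top (F : finFieldType) n (k : nat) (v : 'rV[{poly F}]_n) : 'rV[F]_n :=
  \row_i (v ord0 i)`_k.
Definition toV (F : finFieldType) n K (M : 'M[F]_(n, K)) : 'rV[{poly F}]_n :=
  \row_i \poly_(j < K) (if insub j is Some j' then M i j' else 0).
Definition Full (F : finFieldType) n (G : 'rV[{poly F}]_n -> Prop) k :=
  forall c : 'rV[F]_n, exists v, [/\ G v, bnd k.+1 v & top k v = c].

Lemma subG (F : finFieldType) n (G : 'rV[{poly F}]_n -> Prop) u v :
  is_submodule G -> G u -> G v -> G (u - v).
Proof. by case=> G0 GD GZ Gu Gv; rewrite -scaleN1r; apply: GD => //; apply: GZ. Qed.

Lemma topB (F : finFieldType) n k (u v : 'rV[{poly F}]_n) : top k (u - v) = top k u - top k v.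
Proof. by apply/rowP=> i; rewrite !mxE coefB. Qed.

Lemma topZC (F : finFieldType) n k (c : F) (v : 'rV[{poly F}]_n) : top k (c%:P *: v) = c *: top k v.
Proof. by apply/rowP=> i; rewrite !mxE coefCM. Qed.

Lemma topX (F : finFieldType) n k (v : 'rV[{poly F}]_n) : top k.+1 ('X *: v) = top k v.
Proof. by apply/rowP=> i; rewrite !mxE coefXM. Qed.

Lemma bndP (F : finFieldType) n k (v : 'rV[{poly F}]_n) :
  reflect (forall i, (size (v ord0 i) <= k)%N) (bnd k v).
Proof. exact: forallP. Qed.

Lemma bndB (F : finFieldType) n k (u v : 'rV[{poly F}]_n) : bnd k u -> bnd k v -> bnd k (u - v).
Proof.
move=> /bndP hu /bndP hv; apply/bndP=> i; rewrite !mxE.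
apply: leq_trans (size_polyD _ _) _; rewrite size_polyN geq_max hu hv //.
Qed.

Lemma bndX (F : finFieldType) n k (v : 'rV[{poly F}]_n) : bnd k v -> bnd k.+1 ('X *: v).
Proof.
move=> /bndP hv; apply/bndP=> i; rewrite !mxE.
apply: leq_trans (size_polyMleq _ _) _; rewrite size_polyX /=; exact: hv.
Qed.

Lemma bndZC (F : finFieldType) n k c (v : 'rV[{poly F}]_n) : bnd k v -> bnd k (c%:P *: v).
Proof.
move=> /bndP hv; apply/bndP=> i; rewrite !mxE.
apply: leq_trans (size_polyMleq _ _) _.
have h1 : (size c%:P <= 1)%N := size_polyC_leq1 c.
have h2 := hv i.
move: h1 h2; set a := size _; set b := size _ => h1 h2.
by case: a h1 => [|[|]] //= _; apply: leq_trans h2; rewrite leq_pred.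
Qed.

Lemma bnd_le (F : finFieldType) n k k' (v : 'rV[{poly F}]_n) : (k <= k')%N -> bnd k v -> bnd k' v.
Proof. by move=> kk /bndP hv; apply/bndP=> i; apply: leq_trans (hv i) kk. Qed.

Lemma bnd_top (F : finFieldType) n k (v : 'rV[{poly F}]_n) : bnd k.+1 v -> top k v = 0 -> bnd k v.
Proof.
move=> /bndP hv /rowP ht; apply/bndP=> i; have := ht i; rewrite !mxE => h0.
have := hv i; rewrite leq_eqVlt ltnS => /orP[/eqP hs|//].
have : lead_coef (v ord0 i) = 0 by rewrite lead_coefE hs.
by move/eqP; rewrite lead_coef_eq0 => /eqP ->; rewrite size_poly0.
Qed.

Lemma Full_S (F : finFieldType) n (G : 'rV[{poly F}]_n -> Prop) k :
  is_submodule G -> Full G k -> Full G k.+1.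
Proof.
move=> [G0 GD GZ] hF c; have [v [Gv bv tv]] := hF c.
by exists ('X *: v); split; [apply: GZ | apply: bndX | rewrite topX].
Qed.

Lemma Full_le (F : finFieldType) n (G : 'rV[{poly F}]_n -> Prop) k k' :
  is_submodule G -> (k <= k')%N -> Full G k -> Full G k'.
Proof.
move=> sG /subnK <-; elim: (k' - k)%N => [|j IH] // hF.
by rewrite addSn; apply: Full_S => //; apply: IH.
Qed.

Lemma reduce (F : finFieldType) n (G : 'rV[{poly F}]_n -> Prop) K :
  is_submodule G -> Full G K -> forall w, exists p, bnd K p /\ G (w - p).
Proof.
move=> sG hF w.
have [k bw] : exists k, bnd k w.
  exists (\max_(i < n) size (w ord0 i)); apply/bndP=> i.
  exact: (@leq_bigmax _ (fun i : 'I_n => size (w ord0 i)) i).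
elim: k w bw => [|k IH] w bw.
  exists w; split; last by rewrite subrr; case: sG.
  exact: bnd_le bw.
case: (leqP k.+1 K) => hk.
  exists w; split; last by rewrite subrr; case: sG.
  exact: bnd_le bw.
have [v [Gv bv tv]] := Full_le sG (hk : (K <= k)%N) hF (top k w).
have bwv : bnd k (w - v) by apply: bnd_top; [apply: bndB | rewrite topB tv subrr].
have [p [bp Gp]] := IH _ bwv; exists p; split => //.
have -> : w - p = (w - v - p) + v by rewrite addrAC subrK.
by case: sG => _ GD _; apply: GD.
Qed.


Lemma coef_toV (F : finFieldType) n K (M : 'M[F]_(n, K)) i j :
  (toV M ord0 i)`_j = if insub j is Some j' then M i j' else 0.
Proof. by rewrite mxE coef_poly; case: insubP => [j' -> _|/negbTE ->]. Qed.

Lemma toV_inj (F : finFieldType) n K : injective (@toV F n K).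
Proof.
move=> M N e; apply/matrixP => i j.
have := congr1 (fun v : 'rV[{poly F}]_n => (v ord0 i)`_j) e.
by rewrite /= !coef_toV valK.
Qed.

Lemma bnd_toV (F : finFieldType) n K (M : 'M[F]_(n, K)) : bnd K (toV M).
Proof. by apply/bndP=> i; rewrite mxE size_poly. Qed.

Lemma toV_surj (F : finFieldType) n K (v : 'rV[{poly F}]_n) :
  bnd K v -> exists M : 'M[F]_(n, K), toV M = v.
Proof.
move=> /bndP bv; exists (\matrix_(i, j) (v ord0 i)`_j).
apply/rowP=> i; apply/polyP=> j; rewrite coef_toV.
case: insubP => [j' _ <-|]; first by rewrite mxE.
by rewrite -leqNgt => hj; rewrite nth_default // (leq_trans (bv i) hj).
Qed.

Lemma toVB (F : finFieldType) n K (M N : 'M[F]_(n, K)) : toV (M - N) = toV M - toV N.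
Proof.
apply/rowP=> i; apply/polyP=> j; rewrite [LHS]coef_toV [in RHS]mxE.
rewrite coefD [(- toV N) _ _]mxE coefN !coef_toV.
by case: insub => [j'|]; rewrite ?mxE ?subr0.
Qed.

Definition Bset (F : finFieldType) n (G : 'rV[{poly F}]_n -> Prop) K k :=
  [set M : 'M[F]_(n, K) | `[< G (toV M) >] && bnd k (toV M)].

Lemma BsetP (F : finFieldType) n (G : 'rV[{poly F}]_n -> Prop) K k M :
  reflect (G (toV M) /\ bnd k (toV M)) (M \in Bset G K k).
Proof. by rewrite inE; apply: (iffP andP) => -[/asboolP ? ?]; split => //; apply/asboolP. Qed.

Lemma cardFull (F : finFieldType) n (G : 'rV[{poly F}]_n -> Prop) K N :
  is_submodule G -> has_index G N -> Full G K ->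
  (#|Bset G K K| * N <= #|F| ^ (n * K))%N.
Proof.
move=> sG [reps [sz hd hc]] hF.
have ex : forall k : 'I_N, exists M : 'M[F]_(n, K), `[< G (reps`_k - toV M) >].
  move=> k; have [p [bp Gp]] := reduce sG hF (reps`_k).
  by have [M eM] := toV_surj bp; exists M; apply/asboolP; rewrite eM.
pose P k := xchoose (ex k).
have PP (k : 'I_N) : G (reps`_k - toV (P k)) by exact: (elimT (asboolP _) (xchooseP (ex k))).
pose f (x : 'M[F]_(n, K) * 'I_N) := x.1 + P x.2.
have inj : {in finset.setX (Bset G K K) [set: 'I_N] &, injective f}.
  move=> [M k] [M' k'] /finset.setXP[/BsetP[GM _] _] /finset.setXP[/BsetP[GM' _] _]; rewrite /f /= => e.
  have ekk : k = k'.
    case: (eqVneq k k') => // nk; exfalso.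
    apply: (hd k k') => //; first by move/val_inj; apply/eqP.
    have eP : P k - P k' = M' - M.
      by rewrite -[P k](addKr M) e addrA addrK addrC.
    have -> : reps`_k - reps`_k' =
       (reps`_k - toV (P k)) - (reps`_k' - toV (P k')) + (toV M' - toV M).
      by rewrite -toVB -eP toVB opprB addrACA subrK addrAC subrr add0r.
    by case: (sG) => G0 GD GZ; apply: GD; apply: subG.
  by subst k'; congr (_, _); apply: (addIr (P k)).
have := max_card [set f x | x in finset.setX (Bset G K K) [set: 'I_N]].
by rewrite (card_in_imset inj) cardsX cardsT card_ord card_mx.
Qed.

Lemma cardStep (F : finFieldType) n (G : 'rV[{poly F}]_n -> Prop) K k :
  is_submodule G -> ~ Full G k ->
  (#|Bset G K k.+1| * #|F| <= #|F| ^ n * #|Bset G K k|)%N.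
Proof.
move=> sG hF.
have [c0 hc0] : exists c0, forall v, G v -> bnd k.+1 v -> top k v != c0.
  apply: contrapT => hn; apply: hF => c; apply: contrapT => hc; apply: hn.
  by exists c => v Gv bv; apply/eqP => e; apply: hc; exists v.
pose Rep c := odflt 0 [pick M | (M \in Bset G K k.+1) && (top k (toV M) == c)].
have RepP M : M \in Bset G K k.+1 ->
    Rep (top k (toV M)) \in Bset G K k.+1 /\ top k (toV (Rep (top k (toV M)))) = top k (toV M).
  move=> hM; rewrite /Rep; case: pickP => [R /andP[hR /eqP e]|h] //=.
  by move: (h M); rewrite hM eqxx.
pose f (x : F * 'M[F]_(n, K)) := (top k (toV x.2) + x.1 *: c0, x.2 - Rep (top k (toV x.2))).
have inj : {in finset.setX [set: F] (Bset G K k.+1) &, injective f}.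
  move=> [t M] [t' M'] /finset.setXP[_ hM] /finset.setXP[_ hM']; rewrite /f /= => -[e1 e2].
  have et : t = t'.
    case: (eqVneq t t') => // nt; exfalso.
    have /BsetP[GM bM] := hM; have /BsetP[GM' bM'] := hM'.
    pose u := (t - t')^-1%:P *: (toV M' - toV M).
    have : top k u != c0.
      apply: hc0; first by case: (sG) => _ _ GZ; apply: GZ; apply: subG.
      by apply: bndZC; apply: bndB.
    rewrite /u topZC topB; case/negP; apply/eqP.
    have -> : top k (toV M') - top k (toV M) = (t - t') *: c0.
      by rewrite scalerBl -[top k (toV M')](addrK (t' *: c0)) -e1 addrAC (addrAC (top k (toV M))) subrr add0r.
    by rewrite scalerA mulVf ?scale1r // subr_eq0.
  subst t'; have et : top k (toV M) = top k (toV M') by apply: (addIr (t *: c0)).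
  by rewrite et in e2; congr (_, _); apply: (addIr (- Rep (top k (toV M')))).
have sub : [set f x | x in finset.setX [set: F] (Bset G K k.+1)] \subset finset.setX [set: 'rV[F]_n] (Bset G K k).
  apply/fintype.subsetP => _ /imsetP[[t M] /finset.setXP[_ hM] ->]; apply/finset.setXP; split; first by rewrite inE.
  have [hR eR] := RepP M hM; have /BsetP[GM bM] := hM; have /BsetP[GR bR] := hR.
  apply/BsetP; rewrite toVB; split; first exact: subG.
  by apply: bnd_top; [apply: bndB | rewrite topB eR subrr].
have := subset_leq_card sub.
by rewrite (card_in_imset inj) !cardsX !cardsT card_mx mul1n mulnC.
Qed.

Lemma toV0 (F : finFieldType) n K : toV (0 : 'M[F]_(n, K)) = 0.
Proof. by rewrite -(subrr (0 : 'M[F]_(n, K))) toVB subrr. Qed.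

Lemma base0 (F : finFieldType) n (G : 'rV[{poly F}]_n -> Prop) mu k v :
  (forall v, G v -> v != 0 -> (mu <= vdeg v)%N) -> (k <= mu)%N -> G v -> bnd k v -> v = 0.
Proof.
move=> hmu km Gv /(bnd_le km) /bndP bv.
case: mu hmu km bv => [|mu'] hmu km bv.
  by apply/rowP=> i; rewrite mxE; apply/eqP; rewrite -size_poly_eq0 -leqn0; exact: bv.
apply/eqP; apply: contraT => nz; have := hmu v Gv nz.
suff : (vdeg v <= mu')%N by move=> h1 h2; have := leq_trans h2 h1; rewrite ltnn.
apply/bigmax_leqP => i _; have := bv i; lia.
Qed.

Lemma chain (F : finFieldType) n (G : 'rV[{poly F}]_n -> Prop) mu K :
  is_submodule G -> (forall v, G v -> v != 0 -> (mu <= vdeg v)%N) -> (0 < n)%N ->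
  ~ Full G K -> forall j, (mu + j <= K)%N -> (#|Bset G K (mu + j)| <= #|F| ^ ((n - 1) * j))%N.
Proof.
move=> sG hmu n0 hF; elim=> [|j IH] hj.
  rewrite muln0 expn0 addn0.
  apply: leq_trans (subset_leq_card (_ : Bset G K mu \subset [set 0])) _; last by rewrite cards1.
  apply/fintype.subsetP => M /BsetP[GM bM]; rewrite inE; apply/eqP; apply: toV_inj.
  by rewrite toV0; apply: (base0 hmu (leqnn mu)).
have hF' : ~ Full G (mu + j) by move=> h; apply: hF; apply: (Full_le sG _ h); rewrite addnS in hj; exact: ltnW.
have hs := cardStep K sG hF'; rewrite -addnS in hs.
have hj' : (mu + j <= K)%N by rewrite addnS in hj; exact: ltnW.
have := IH hj'.
have q0 : (0 < #|F|)%N by apply/card_gt0P; exists 0.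
have e : (#|F| ^ ((n-1) * j.+1) * #|F| = #|F| ^ n * #|F| ^ ((n-1) * j))%N.
  by rewrite mulnS expnD mulnAC -expnSr subn1 prednK.
move=> h; rewrite -(leq_pmul2r q0) e; apply: leq_trans hs _.
by rewrite leq_mul2l h orbT.
Qed.

Lemma vdeg_bnd (F : finFieldType) n d (v : 'rV[{poly F}]_n) : (vdeg v <= d)%N -> bnd d.+1 v.
Proof.
move=> hv; apply/bndP => i.
have := leq_trans (@leq_bigmax _ (fun i : 'I_n => (size (v ord0 i)).-1) i) hv.
rewrite /=; lia.
Qed.

Lemma mainNat (F : finFieldType) n m mu (G : 'rV[{poly F}]_n -> Prop) K :
  lattice_vol G (#|F| ^ m)%N ->
  (forall v, G v -> v != 0 -> (mu <= vdeg v)%N) -> (0 < n)%N ->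
  (#|Bset G K K| * #|F| ^ m <= #|F| ^ (n * K))%N \/
  (#|Bset G K K| <= #|F| ^ ((n - 1) * (K - mu)))%N.
Proof.
move=> [sG hidx] hmu n0.
case: (pselect (Full G K)) => hF; first by left; apply: cardFull.
right; case: (leqP mu K) => hmK.
  by have := chain sG hmu n0 hF (j := K - mu); rewrite subnKC //; apply.
have -> : (K - mu = 0)%N by apply/eqP; rewrite subn_eq0 ltnW.
rewrite muln0 expn0.
apply: leq_trans (subset_leq_card (_ : Bset G K K \subset [set 0])) _; last by rewrite cards1.
apply/fintype.subsetP => M /BsetP[GM bM]; rewrite inE; apply/eqP; apply: toV_inj.
by rewrite toV0; apply: (base0 hmu (ltnW hmK)).
Qed.

Unset Implicit Arguments.

Theorem mainTheorem11 (R : realType) (F : finFieldType) (n m mu : nat)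
  (G : 'rV[{poly F}]_n -> Prop) (s : R) :
  lattice_vol G (#|F| ^ m)%N ->
  (exists v, [/\ G v, v != 0 & vdeg v = mu]) ->
  (forall v, G v -> v != 0 -> (mu <= vdeg v)%N) ->
  0 <= s ->
  forall l : seq ('rV[{poly F}]_n),
    uniq l ->
    (forall v, v \in l -> G v /\ (vdeg v)%:R <= s) ->
    (size l)%:R <= (#|F|%:R : R) `^
      Num.max 0 (Num.max (n%:R * (s + 1) - m%:R) ((n%:R - 1) * (s + 1 - mu%:R))).
Proof.
move=> hL [v0 [Gv0 nz0 dv0]] hmu s0 l ul hl.
have n0 : (0 < n)%N.
  by case: n G v0 Gv0 nz0 dv0 hmu hL l ul hl => // G v0; rewrite thinmx0 eqxx.
set K := (Num.truncn s).+1.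
have sK : (K%:R <= s + 1 :> R) by rewrite /K -natr1 lerD2r truncn_le.
have hsz : (size l <= #|Bset G K K|)%N.
  rewrite -(size_image (@toV F n K)); apply: uniq_leq_size => // v /hl [Gv dv].
  have : (vdeg v <= Num.truncn s)%N by rewrite truncn_ge_nat.
  move/vdeg_bnd => bv; have [M eM] := toV_surj bv.
  by apply/fintype.imageP; exists M => //; apply/BsetP; rewrite eM.
have q1 : (1 <= (#|F|%:R : R)).
  by rewrite ler1n; apply/card_gt0P; exists 0.
have q0 : (0 < (#|F|%:R : R)) by apply: lt_le_trans q1.
apply: le_trans (_ : (#|Bset G K K|)%:R <= _); first by rewrite ler_nat.
case: (mainNat K hL hmu n0) => h.
  apply: (@le_trans _ _ ((#|F|%:R : R) `^ ((n * K)%:R - m%:R))).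
    rewrite powRB; last by apply/implyP => _; rewrite gt_eqF.
    rewrite !powR_mulrn ?(ltW q0) //.
    rewrite ler_pdivlMr; last exact: exprn_gt0.
    by rewrite -!natrX -natrM ler_nat.
  apply: ler_powR => //; rewrite le_max; apply/orP; right.
  rewrite le_max; apply/orP; left; rewrite lerD2r natrM.
  by apply: ler_wpM2l => //.
apply: (@le_trans _ _ ((#|F|%:R : R) `^ ((n - 1) * (K - mu))%:R)).
  by rewrite powR_mulrn ?(ltW q0) // -natrX ler_nat.
apply: ler_powR => //; rewrite le_max; apply/orP.
case: (leqP mu K) => hmK; last first.
  by left; have -> : (K - mu = 0)%N by apply/eqP; rewrite subn_eq0 ltnW.
right; rewrite le_max; apply/orP; right.
rewrite natrM natrB ?natrB //; apply: ler_wpM2l; first by rewrite subr_ge0 ler1n.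
by rewrite lerD2r.
Qed.
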